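(* Let $T\ge 1$ be an integer and $M>0$. Assume: (A1) $f:\{1,\dots,T\}\times\mathbb{R}\times[-M,M]\to\mathbb{R}$ is such that $f(k,\cdot,\cdot)$ is continuous on $\mathbb{R}\times[-M,M]$ for each $k\in\{1,\dots,T\}$; $p:\{1,\dots,T+1\}\to\mathbb{R}$ and $g:\{1,\dots,T\}\to\mathbb{R}$; (A2) there exists $\alpha>0$ such that $y f(k,y,u)\le 0$ for all $|y|\ge\alpha$, all $|u|\le M$ and all $k=1,\dots,T$; (A3) $m=\min_{k\in\{1,\dots,T+1\}}p(k)>0$. Then for every fixed $u\in L_M$ the set $V_u$ is nonempty, i.e. there exists at least one solution $x\in V_u$ of the problem $$\Delta\big(p(k)\Delta x(k-1)\big)+f(k,x(k),u(k))=g(k),\quad k=1,\dots,T,\qquad x(0)=x(T+1)=0.$$ Moreover, let $\{u_n\}_{n\ge1}\subset L_M$ be a sequence converging to $\overline{u}\in L_M$ (in the maximum norm). Then for any sequence $\{x_n\}_{n\ge1}$ with $x_n\in V_{u_n}$ for each $n$, there exist a subsequence $\{x_{n_i}\}_{i\ge1}$ and $\overline{x}\in E$ such that $x_{n_i}\to\overline{x}$ as $i\to\infty$ and $J_{\overline{u}}(\overline{x})=\inf_{y\in E}J_{\overline{u}}(y)$. Furthermore $\overline{x}\in V_{\overline{u}}$, i.e. $\overline{x}$ satisfies $$\Delta\big(p(k)\Delta \overline{x}(k-1)\big)+f(k,\overline{x}(k),\overline{u}(k))=g(k),\quad k=1,\dots,T,\qquad \overline{x}(0)=\overline{x}(T+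1)=0.$$
   Context: For integers $A\le B$, $[A,B]$ denotes the discrete interval $\{A,A+1,\dots,B\}$. $\Delta$ is the forward difference: $\Delta x(k)=x(k+1)-x(k)$. $L_M=\{u:\{1,\dots,T\}\to\mathbb{R} : \max_{k}|u(k)|\le M\}$, with the maximum norm. $E$ is the space of functions $y:\{0,\dots,T+1\}\to\mathbb{R}$ with $y(0)=y(T+1)=0$, normed by $\|y\|=\sqrt{\sum_{k=1}^{T}(\Delta y(k))^2}$ (equivalent to the Euclidean norm; convergence in $E$ refers to this norm). For $k\in\{1,\dots,T\}$, $y\in\mathbb{R}$, $|u|\le M$, let $F(k,y,u)=\int_0^{y}f(k,t,u)\,dt$. For $u\in L_M$ the functional $J_u:E\to\mathbb{R}$ is $$J_u(y)=\sum_{k=1}^{T+1}\frac{p(k)}{2}\big(\Delta y(k-1)\big)^2-\sum_{k=1}^{T}F(k,y(k),u(k))+\sum_{k=1}^{T}g(k)y(k),$$ and $V_u=\{x\in E: J_u(x)=\inf_{v\in E}J_u(v)\ \text{and}\ \tfrac{d}{dx}J_u(x)=0\}$ (the set of minimizers of $J_u$ at which its derivative vanishes). *)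

(* Defs.v *)
From Stdlib Require Export Reals Lra List.
From Coquelicot Require Export Coquelicot.
Open Scope R_scope.

Definition Delta (x : nat -> R) (k : nat) : R := x (S k) - x k.

(* functions y : {0..T+1} -> R, represented by nat -> R; the space E *)
Definition inE (T : nat) (y : nat -> R) : Prop := y 0%nat = 0 /\ y (S T) = 0.

Definition normE (T : nat) (y : nat -> R) : R :=
  sqrt (sum_n_m (fun k => (Delta y k) ^ 2) 1 T).

Definition inLM (T : nat) (M : R) (u : nat -> R) : Prop :=
  forall k, (1 <= k <= T)%nat -> Rabs (u k) <= M.

Definition maxnorm (T : nat) (u : nat -> R) : R :=
  fold_right Rmax 0 (map (fun k => Rabs (u k)) (seq 1 T)).

Definition minp (T : nat) (p : nat -> R) : R :=
  fold_right Rmin (p 1%nat) (map p (seq 1 (S T))).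

Definition Fint (f : nat -> R -> R -> R) (k : nat) (y u : R) : R :=
  RInt (fun t => f k t u) 0 y.

Definition J (T : nat) (p : nat -> R) (f : nat -> R -> R -> R) (g : nat -> R)
    (u : nat -> R) (y : nat -> R) : R :=
  sum_n_m (fun k => p k / 2 * (Delta y (k - 1)) ^ 2) 1 (S T)
  - sum_n_m (fun k => Fint f k (y k) (u k)) 1 T
  + sum_n_m (fun k => g k * y k) 1 T.

Definition V (T : nat) (p : nat -> R) (f : nat -> R -> R -> R) (g : nat -> R)
    (u : nat -> R) (x : nat -> R) : Prop :=
  inE T x
  /\ (forall v, inE T v -> J T p f g u x <= J T p f g u v)
  /\ (forall h, inE T h ->
        is_derive (fun t : R => J T p f g u (fun k => x k + t * h k)) 0 0).

Definition cont_f (T : nat) (M : R) (f : nat -> R -> R -> R) : Prop :=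
  forall k, (1 <= k <= T)%nat -> forall y u, -M <= u <= M ->
    filterlim (fun z : R * R => f k (fst z) (snd z))
      (within (fun z : R * R => -M <= snd z <= M) (locally (y, u)))
      (locally (f k y u)).

(* Main.v *)
Require Import Defs.
From Stdlib Require Import Classical ClassicalEpsilon Lia ZArith FunctionalExtensionality.
Open Scope R_scope.

Lemma fchoice {A B : Type} (P : A -> B -> Prop) :
  (forall a, exists b, P a b) -> exists f : A -> B, forall a, P a (f a).
Proof.
  intros H. exists (fun a => proj1_sig (constructive_indefinite_description _ (H a))).
  intro a. exact (proj2_sig (constructive_indefinite_description _ (H a))).
Qed.

Lemma small_inv (eps : R) : 0 < eps -> exists N : nat, / (INR N + 1) < eps.
Proof.
  intros He. destruct (archimed (/ eps)) as [H1 _].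
  exists (Z.to_nat (up (/ eps))).
  assert (Hz : (0 <= up (/ eps))%Z).
  { apply le_IZR. assert (0 < / eps) by (apply Rinv_0_lt_compat; lra). lra. }
  rewrite INR_IZR_INZ, Z2Nat.id by exact Hz.
  assert (0 < / eps) by (apply Rinv_0_lt_compat; lra).
  set (z := IZR (up (/ eps))) in *.
  replace eps with (/ / eps) at 1 by (field; lra).
  apply Rinv_lt_contravar; [apply Rmult_lt_0_compat; lra | lra].
Qed.

Definition incr (phi : nat -> nat) := forall i, (phi i < phi (S i))%nat.

Lemma incr_lt phi : incr phi -> forall a b, (a < b)%nat -> (phi a < phi b)%nat.
Proof.
  intros H a b Hab. induction Hab. apply H. specialize (H m). lia.
Qed.

Lemma incr_ge phi : incr phi -> forall i, (i <= phi i)%nat.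
Proof. intros H i. induction i. lia. specialize (H i). lia. Qed.

Lemma incr_comp phi psi : incr phi -> incr psi -> incr (fun i => phi (psi i)).
Proof. intros H1 H2 i. apply incr_lt; auto. Qed.

Lemma sub_cv a l phi : Un_cv a l -> incr phi -> Un_cv (fun i => a (phi i)) l.
Proof.
  intros H Hp e He. destruct (H e He) as [N HN]. exists N. intros n Hn.
  apply HN. pose proof (incr_ge phi Hp n). lia.
Qed.

Lemma BW1 (a : nat -> R) B : (forall n, Rabs (a n) <= B) ->
  exists phi, incr phi /\ exists l, Un_cv (fun i => a (phi i)) l.
Proof.
  intros Hb.
  destruct (Bolzano_Weierstrass a (fun c => -B <= c <= B) (compact_P3 (-B) B)) as [l Hl].
  { intro n. specialize (Hb n). apply Rabs_le_between. exact Hb. }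
  assert (Hc : forall i N, exists p, (N <= p)%nat /\ Rabs (a p - l) < / (INR i + 1)).
  { intros i N. destruct (Hl (disc l (mkposreal _ (RinvN_pos i))) N) as [p Hp].
    exists (mkposreal _ (RinvN_pos i)). intros y Hy; exact Hy.
    exists p. exact Hp. }
  destruct (fchoice (fun (iN : nat * nat) p => (snd iN <= p)%nat /\ Rabs (a p - l) < / (INR (fst iN) + 1)))
    as [c Hc'].
  { intros [i N]. apply Hc. }
  set (phi := fix phi (i : nat) : nat := match i with
               | O => c (0%nat, 0%nat) | S j => c (S j, S (phi j)) end).
  exists phi. split.
  - intro i. simpl. destruct (Hc' (S i, S (phi i))) as [H1 _]. simpl in H1. lia.
  - exists l. intros e He. destruct (small_inv e He) as [N HN]. exists N.
    intros n Hn. unfold R_dist.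
    assert (Hn' : Rabs (a (phi n) - l) < / (INR n + 1)).
    { destruct n; simpl. apply (Hc' (0%nat,0%nat)). apply (Hc' (S n, S (phi n))). }
    eapply Rlt_le_trans. exact Hn'.
    apply Rlt_le in HN. eapply Rle_trans; [|exact HN].
    apply Rinv_le_contravar. pose proof (pos_INR N); lra.
    apply le_INR in Hn. lra.
Qed.

Lemma BWK : forall K (x : nat -> nat -> R) B,
  (forall n j, (1 <= j <= K)%nat -> Rabs (x n j) <= B) ->
  exists phi, incr phi /\ forall j, (1 <= j <= K)%nat -> exists l, Un_cv (fun i => x (phi i) j) l.
Proof.
  induction K; intros x B Hb.
  - exists (fun i => i). split. intro; lia. intros; lia.
  - destruct (IHK x B) as [phi [Hp Hl]]. { intros; apply Hb; lia. }
    destruct (BW1 (fun i => x (phi i) (S K)) B) as [psi [Hq [l Hl2]]]. { intros; apply Hb; lia. }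
    exists (fun i => phi (psi i)). split. apply incr_comp; auto.
    intros j Hj. destruct (Nat.eq_dec j (S K)) as [->|Hne].
    + exists l. exact Hl2.
    + destruct (Hl j ltac:(lia)) as [l' Hl']. exists l'.
      exact (sub_cv (fun i => x (phi i) j) l' psi Hl' Hq).
Qed.

Lemma cv_abs_le a l B : Un_cv a l -> (forall n, Rabs (a n) <= B) -> Rabs l <= B.
Proof.
  intros H Hb. destruct (Rle_or_lt (Rabs l) B) as [h|h]; auto.
  destruct (H (Rabs l - B)) as [N HN]. lra.
  specialize (HN N (le_n _)). unfold R_dist in HN. specialize (Hb N).
  pose proof (Rabs_triang_inv l (a N)). rewrite <- Rabs_Ropp in HN.
  replace (- (a N - l)) with (l - a N) in HN by ring. lra.
Qed.

Lemma nat_gt (r : R) : exists N : nat, r < INR N.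
Proof.
  destruct (archimed r) as [H1 _].
  destruct (Z_le_gt_dec 0 (up r)) as [Hz|Hz].
  - exists (Z.to_nat (up r)). rewrite INR_IZR_INZ, Z2Nat.id by exact Hz. lra.
  - exists 0%nat. simpl. apply Z.gt_lt in Hz. apply IZR_lt in Hz. lra.
Qed.

Lemma sub_cv_ge a l idx : Un_cv a l -> (forall i, (i <= idx i)%nat) -> Un_cv (fun i => a (idx i)) l.
Proof.
  intros H Hp e He. destruct (H e He) as [N HN]. exists N. intros n Hn.
  apply HN. specialize (Hp n). lia.
Qed.

Lemma cv_const c : Un_cv (fun _ => c) c.
Proof. intros e He. exists 0%nat. intros. unfold R_dist. rewrite Rminus_eq_0, Rabs_R0. exact He. Qed.

Lemma cont_ed T M f k : cont_f T M f -> (1 <= k <= T)%nat -> forall y u, -M <= u <= M ->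
  forall eps, 0 < eps -> exists del, 0 < del /\ forall a b, Rabs (a - y) < del -> Rabs (b - u) < del ->
    -M <= b <= M -> Rabs (f k a b - f k y u) < eps.
Proof.
  intros Hc Hk y u Hu eps He.
  pose proof (Hc k Hk y u Hu (ball (f k y u) eps)) as H.
  destruct H as [d Hd]. { exists (mkposreal eps He). intros z Hz. exact Hz. }
  exists d. split. apply cond_pos. intros a b Ha Hb HM.
  specialize (Hd (a, b)). apply Hd. split; exact Ha || exact Hb. exact HM.
Qed.

Lemma seq_cont T M f k : cont_f T M f -> (1 <= k <= T)%nat ->
  forall a b y u, Un_cv a y -> Un_cv b u -> (forall n, -M <= b n <= M) -> -M <= u <= M ->
  Un_cv (fun n => f k (a n) (b n)) (f k y u).
Proof.
  intros Hc Hk a b y u Ha Hb HbM Hu e He.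
  destruct (cont_ed T M f k Hc Hk y u Hu e He) as [d [Hd H]].
  destruct (Ha d Hd) as [N1 H1]. destruct (Hb d Hd) as [N2 H2].
  exists (max N1 N2). intros n Hn. unfold R_dist. apply H.
  apply H1; lia. apply H2; lia. apply HbM.
Qed.

Lemma cont_t T M f k : cont_f T M f -> (1 <= k <= T)%nat -> forall u, -M <= u <= M ->
  forall t, continuous (fun s => f k s u) t.
Proof.
  intros Hc Hk u Hu t P [e He].
  destruct (cont_ed T M f k Hc Hk t u Hu e (cond_pos e)) as [d [Hd H]].
  exists (mkposreal d Hd). intros s Hs. apply He. apply H. exact Hs.
  rewrite Rminus_eq_0, Rabs_R0. exact Hd. exact Hu.
Qed.

Lemma exRInt T M f k : cont_f T M f -> (1 <= k <= T)%nat -> forall u, -M <= u <= M ->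
  forall a b, ex_RInt (fun s => f k s u) a b.
Proof. intros. apply (ex_RInt_continuous (V:=R_CompleteNormedModule)). intros. eapply cont_t; eauto. Qed.

Lemma fbound T M f k : cont_f T M f -> (1 <= k <= T)%nat -> forall A,
  exists B, forall t u, Rabs t <= A -> -M <= u <= M -> Rabs (f k t u) <= B.
Proof.
  intros Hc Hk A. apply NNPP. intro Hn.
  assert (H : forall n : nat, exists z : R * R, Rabs (fst z) <= A /\ -M <= snd z <= M /\ INR n < Rabs (f k (fst z) (snd z))).
  { intro n. apply NNPP. intro H. apply Hn. exists (INR n). intros t u Ht Hu.
    apply Rnot_lt_le. intro H'. apply H. exists (t, u). simpl. auto. }
  destruct (fchoice _ H) as [z Hz].
  destruct (BWK 2 (fun n j => if Nat.eqb j 1 then fst (z n) else snd (z n)) (Rabs A + Rabs M)) as [phi [Hp Hl]].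
  { intros n j Hj. destruct (Hz n) as [H1 [H2 _]]. destruct (Nat.eqb j 1).
    pose proof (Rabs_pos M). pose proof (Rle_abs A). lra.
    pose proof (Rabs_pos A). pose proof (Rle_abs M). apply Rabs_le_between in H1 || idtac.
    apply Rabs_le. pose proof (Rle_abs M). pose proof (Rabs_pos A). lra. }
  destruct (Hl 1%nat ltac:(lia)) as [lt Hlt]. destruct (Hl 2%nat ltac:(lia)) as [lu Hlu].
  simpl in Hlt, Hlu.
  assert (HluM : -M <= lu <= M).
  { apply Rabs_le_between. apply (cv_abs_le _ _ _ Hlu). intro n. destruct (Hz (phi n)) as [_ [H2 _]].
    apply Rabs_le. exact H2. }
  pose proof (seq_cont T M f k Hc Hk _ _ _ _ Hlt Hlu (fun n => proj1 (proj2 (Hz (phi n)))) HluM) as Hf.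
  destruct (Hf 1 Rlt_0_1) as [N HN].
  destruct (nat_gt (Rabs (f k lt lu) + 1)) as [N2 HN2].
  specialize (HN (max N N2) ltac:(lia)). unfold R_dist in HN.
  destruct (Hz (phi (max N N2))) as [_ [_ H3]].
  pose proof (incr_ge phi Hp (max N N2)).
  assert (INR N2 <= INR (phi (max N N2))) by (apply le_INR; lia).
  pose proof (Rabs_triang_inv (f k (fst (z (phi (Init.Nat.max N N2)))) (snd (z (phi (Init.Nat.max N N2))))) (f k lt lu)).
  lra.
Qed.

Lemma RInt_abs_bound (h : R -> R) y B : ex_RInt h 0 y ->
  (forall t, Rmin 0 y <= t <= Rmax 0 y -> Rabs (h t) <= B) -> Rabs (RInt h 0 y) <= Rabs y * B.
Proof.
  intros He Hb. destruct (Rle_or_lt 0 y) as [Hy|Hy].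
  - rewrite (Rabs_pos_eq y) by lra. replace (y * B) with ((y - 0) * B) by ring.
    apply abs_RInt_le_const; auto. intros t Ht. apply Hb. rewrite Rmin_left, Rmax_right; lra.
  - rewrite (Rabs_left y) by lra. rewrite <- (opp_RInt_swap h y 0).
    2:{ apply ex_RInt_swap. exact He. }
    change (opp (RInt h y 0)) with (- RInt h y 0). rewrite Rabs_Ropp.
    replace (- y) with (0 - y) by ring.
    apply abs_RInt_le_const; auto. lra. apply ex_RInt_swap. exact He.
    intros t Ht. apply Hb. rewrite Rmin_right, Rmax_left; lra.
Qed.

Lemma RInt_zero a b : RInt (fun _ => 0) a b = 0.
Proof. rewrite RInt_const. apply (scal_zero_r (V:=R_ModuleSpace)). Qed.

Lemma Fupper T M f k alpha : cont_f T M f -> (1 <= k <= T)%nat -> 0 < alpha ->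
  (forall k y u, (1 <= k <= T)%nat -> alpha <= Rabs y -> Rabs u <= M -> y * f k y u <= 0) ->
  exists C, forall y u, -M <= u <= M -> Fint f k y u <= C.
Proof.
  intros Hc Hk Ha HA. destruct (fbound T M f k Hc Hk alpha) as [B HB].
  exists (alpha * Rabs B). intros y u Hu. unfold Fint.
  set (g := fun s => f k s u).
  assert (Hex : forall a b, ex_RInt g a b) by (intros; apply (exRInt T M f k Hc Hk u Hu)).
  assert (Hsmall : forall z, Rabs z <= alpha -> RInt g 0 z <= alpha * Rabs B).
  { intros z Hz. eapply Rle_trans. apply Rle_abs. eapply Rle_trans.
    apply (RInt_abs_bound g z (Rabs B)). apply Hex.
    intros t Ht. eapply Rle_trans. apply (HB t u). apply Rabs_le_between in Hz.
    apply Rabs_le. unfold Rmin, Rmax in Ht. destruct (Rle_dec 0 z); lra. exact Hu. apply Rle_abs.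
    apply Rmult_le_compat_r. apply Rabs_pos. exact Hz. }
  assert (HuM : Rabs u <= M) by (apply Rabs_le; exact Hu).
  destruct (Rle_or_lt (Rabs y) alpha) as [Hy|Hy]. apply Hsmall; exact Hy.
  destruct (Rle_or_lt 0 y) as [Hy0|Hy0].
  - rewrite Rabs_pos_eq in Hy by lra.
    rewrite <- (RInt_Chasles g 0 alpha y) by apply Hex.
    change (plus (RInt g 0 alpha) (RInt g alpha y)) with (RInt g 0 alpha + RInt g alpha y).
    assert (RInt g alpha y <= 0).
    { rewrite <- (RInt_zero alpha y). apply RInt_le. lra. apply Hex. apply ex_RInt_const.
      intros t Ht. unfold g. specialize (HA k t u Hk). assert (alpha <= Rabs t) by (rewrite Rabs_pos_eq; lra).
      specialize (HA H HuM). nra. }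
    pose proof (Hsmall alpha). rewrite Rabs_pos_eq in H0 by lra. specialize (H0 (Rle_refl _)). lra.
  - rewrite Rabs_left in Hy by lra.
    rewrite <- (RInt_Chasles g 0 (-alpha) y) by apply Hex.
    change (plus (RInt g 0 (-alpha)) (RInt g (-alpha) y)) with (RInt g 0 (-alpha) + RInt g (-alpha) y).
    assert (0 <= RInt g y (-alpha)).
    { rewrite <- (RInt_zero y (-alpha)). apply RInt_le. lra. apply ex_RInt_const. apply Hex.
      intros t Ht. unfold g. specialize (HA k t u Hk). assert (alpha <= Rabs t) by (rewrite Rabs_left; lra).
      specialize (HA H HuM). nra. }
    rewrite <- (opp_RInt_swap g y (-alpha)) by apply Hex.
    change (opp (RInt g y (- alpha))) with (- RInt g y (- alpha)).
    pose proof (Hsmall (-alpha)). rewrite Rabs_Ropp, Rabs_pos_eq in H0 by lra. specialize (H0 (Rle_refl _)). lra.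
Qed.

Lemma Fsubst T M f k : cont_f T M f -> (1 <= k <= T)%nat -> forall u, -M <= u <= M ->
  forall y, Fint f k y u = RInt (fun s => y * f k (y * s) u) 0 1.
Proof.
  intros Hc Hk u Hu y. unfold Fint.
  transitivity (RInt (fun s => f k s u) (y * 0 + 0) (y * 1 + 0)). f_equal; ring.
  rewrite <- (RInt_comp_lin (fun s => f k s u) y 0 0 1).
  apply RInt_ext. intros x _. replace (y * x + 0) with (y * x) by ring. reflexivity.
  apply (exRInt T M f k Hc Hk u Hu).
Qed.

Lemma unif T M f k : cont_f T M f -> (1 <= k <= T)%nat -> forall yn y un u,
  Un_cv yn y -> Un_cv un u -> (forall n, -M <= un n <= M) -> -M <= u <= M ->
  forall eps, 0 < eps -> exists N, forall n, (N <= n)%nat -> forall s, 0 <= s <= 1 ->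
    Rabs (yn n * f k (yn n * s) (un n) - y * f k (y * s) u) <= eps.
Proof.
  intros Hc Hk yn y un u Hy Hu HuM HM eps He. apply NNPP. intro Hn.
  assert (H : forall N : nat, exists w : nat * R, (N <= fst w)%nat /\ 0 <= snd w <= 1 /\
     eps < Rabs (yn (fst w) * f k (yn (fst w) * snd w) (un (fst w)) - y * f k (y * snd w) u)).
  { intro N. apply NNPP. intro H. apply Hn. exists N. intros n Hnn s Hs.
    apply Rnot_lt_le. intro H'. apply H. exists (n, s). simpl. auto. }
  destruct (fchoice _ H) as [w Hw].
  destruct (BW1 (fun N => snd (w N)) 1) as [psi [Hp [s Hs]]].
  { intro n. destruct (Hw n) as [_ [H2 _]]. apply Rabs_le. lra. }
  set (m := fun i => fst (w (psi i))).
  assert (Hm : forall i, (i <= m i)%nat).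
  { intro i. unfold m. destruct (Hw (psi i)) as [H1 _]. pose proof (incr_ge psi Hp i). lia. }
  pose proof (sub_cv_ge yn y m Hy Hm) as Hy'. pose proof (sub_cv_ge un u m Hu Hm) as Hu'.
  assert (C1 : Un_cv (fun i => yn (m i) * f k (yn (m i) * snd (w (psi i))) (un (m i))) (y * f k (y * s) u)).
  { apply CV_mult. exact Hy'. apply (seq_cont T M f k Hc Hk). apply CV_mult; auto. exact Hu'.
    intro; apply HuM. exact HM. }
  assert (C2 : Un_cv (fun i => y * f k (y * snd (w (psi i))) u) (y * f k (y * s) u)).
  { apply CV_mult. apply cv_const. apply (seq_cont T M f k Hc Hk). apply CV_mult; auto. apply cv_const.
    apply cv_const. intro; exact HM. exact HM. }
  pose proof (CV_minus _ _ _ _ C1 C2) as C3. rewrite Rminus_eq_0 in C3.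
  destruct (C3 eps He) as [N HN]. specialize (HN N (le_n _)). unfold R_dist in HN.
  rewrite Rminus_0_r in HN. destruct (Hw (psi N)) as [_ [_ H3]]. unfold m in HN. lra.
Qed.

Lemma exRInt_sub T M f k : cont_f T M f -> (1 <= k <= T)%nat -> forall u, -M <= u <= M ->
  forall y, ex_RInt (fun s => y * f k (y * s) u) 0 1.
Proof.
  intros Hc Hk u Hu y.
  eapply ex_RInt_ext. 2: apply (ex_RInt_comp_lin (fun s => f k s u) y 0 0 1).
  intros x _. simpl. replace (y * x + 0) with (y * x) by ring. reflexivity.
  apply (exRInt T M f k Hc Hk u Hu).
Qed.

Lemma Fcont T M f k : cont_f T M f -> (1 <= k <= T)%nat -> forall yn y un u,
  Un_cv yn y -> Un_cv un u -> (forall n, -M <= un n <= M) -> -M <= u <= M ->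
  Un_cv (fun n => Fint f k (yn n) (un n)) (Fint f k y u).
Proof.
  intros Hc Hk yn y un u Hy Hu HuM HM e He.
  destruct (unif T M f k Hc Hk yn y un u Hy Hu HuM HM (e/2)) as [N HN]. lra.
  exists N. intros n Hn. unfold R_dist.
  rewrite (Fsubst T M f k Hc Hk (un n) (HuM n)), (Fsubst T M f k Hc Hk u HM).
  pose proof (RInt_minus (V:=R_CompleteNormedModule) _ _ 0 1 (exRInt_sub T M f k Hc Hk (un n) (HuM n) (yn n))
       (exRInt_sub T M f k Hc Hk u HM y)) as E.
  change (minus (RInt (fun s : R => yn n * f k (yn n * s) (un n)) 0 1)
         (RInt (fun s : R => y * f k (y * s) u) 0 1)) with
      (RInt (fun s : R => yn n * f k (yn n * s) (un n)) 0 1 - RInt (fun s : R => y * f k (y * s) u) 0 1) in E.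
  rewrite <- E.
  eapply Rle_lt_trans. apply abs_RInt_le_const. lra.
  apply (ex_RInt_minus (V:=R_NormedModule)); apply (exRInt_sub T M f k Hc Hk); auto.
  intros t Ht. apply HN; auto. lra.
Qed.

Lemma sum_rec (a : nat -> R) n m : (n <= S m)%nat -> sum_n_m a n (S m) = sum_n_m a n m + a (S m).
Proof. intros H. rewrite sum_n_Sm by exact H. reflexivity. Qed.

Lemma sum_empty (a : nat -> R) n m : (m < n)%nat -> sum_n_m a n m = 0.
Proof. intros H. rewrite sum_n_m_zero by exact H. reflexivity. Qed.

Lemma sum_cv n : forall m (a : nat -> nat -> R) (b : nat -> R),
  (forall k, (n <= k <= m)%nat -> Un_cv (fun i => a i k) (b k)) ->
  Un_cv (fun i => sum_n_m (a i) n m) (sum_n_m b n m).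
Proof.
  induction m; intros a b H.
  - destruct n.
    + rewrite sum_n_n. intros e He. destruct (H 0%nat ltac:(lia) e He) as [N HN]. exists N.
      intros i Hi. rewrite sum_n_n. apply HN; auto.
    + rewrite sum_empty by lia. intros e He. exists 0%nat. intros. rewrite sum_empty by lia.
      unfold R_dist. rewrite Rminus_eq_0, Rabs_R0; lra.
  - destruct (le_lt_dec n (S m)) as [Hn|Hn].
    + rewrite sum_rec by exact Hn.
      assert (E : forall i, sum_n_m (a i) n (S m) = sum_n_m (a i) n m + a i (S m)) by (intro; apply sum_rec; exact Hn).
      intros e He. destruct (CV_plus _ _ _ _ (IHm a b ltac:(intros; apply H; lia)) (H (S m) ltac:(lia)) e He) as [N HN].
      exists N. intros i Hi. rewrite E. apply HN; auto.
    + rewrite sum_empty by lia. intros e He. exists 0%nat. intros. rewrite sum_empty by lia.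
      unfold R_dist. rewrite Rminus_eq_0, Rabs_R0; lra.
Qed.

Lemma sum_le_loc n : forall m (a b : nat -> R),
  (forall k, (n <= k <= m)%nat -> a k <= b k) -> sum_n_m a n m <= sum_n_m b n m.
Proof.
  induction m; intros a b H.
  - destruct n. rewrite !sum_n_n. apply H; lia. rewrite !sum_empty by lia. lra.
  - destruct (le_lt_dec n (S m)) as [Hn|Hn].
    + rewrite !sum_rec by exact Hn. apply Rplus_le_compat. apply IHm; intros; apply H; lia. apply H; lia.
    + rewrite !sum_empty by lia. lra.
Qed.

Lemma sum_ext_R n m (a b : nat -> R) :
  (forall k, (n <= k <= m)%nat -> a k = b k) -> sum_n_m a n m = sum_n_m b n m.
Proof. apply sum_n_m_ext_loc. Qed.

Lemma sum_plus_R n m (a b : nat -> R) : sum_n_m (fun k => a k + b k) n m = sum_n_m a n m + sum_n_m b n m.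
Proof. apply (sum_n_m_plus (G:=R_AbelianMonoid)). Qed.

Lemma sum_scal_R n m c (a : nat -> R) : sum_n_m (fun k => c * a k) n m = c * sum_n_m a n m.
Proof. apply (sum_n_m_mult_l (K:=R_Ring)). Qed.

Lemma sum_abs_R n m (a : nat -> R) : Rabs (sum_n_m a n m) <= sum_n_m (fun k => Rabs (a k)) n m.
Proof. apply (norm_sum_n_m (K:=R_AbsRing) (V:=R_NormedModule)). Qed.

Lemma sum_single n m k (a : nat -> R) : (n <= k <= m)%nat ->
  (forall j, (n <= j <= m)%nat -> j <> k -> a j = 0) -> sum_n_m a n m = a k.
Proof.
  intros Hk H. rewrite (sum_n_m_Chasles a n k m) by lia.
  destruct (Nat.eq_dec n k) as [Hp|Hp]; [destruct Hp|].
  2:{ replace k with (S (pred k)) at 1 2 by lia. rewrite sum_n_Sm by lia.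
    replace (S (pred k)) with k by lia.
    change (plus (plus (sum_n_m a n (pred k)) (a k)) (sum_n_m a (S k) m) = a k).
    rewrite (sum_ext_R n (pred k) a (fun _ => 0)) by (intros; apply H; lia).
    rewrite (sum_ext_R (S k) m a (fun _ => 0)) by (intros; apply H; lia).
    rewrite !(sum_n_m_const_zero (G:=R_AbelianMonoid)).
    change (0 + a k + 0 = a k). ring. }
  rewrite sum_n_n.
    rewrite (sum_ext_R (S n) m a (fun _ => 0)) by (intros; apply H; lia).
    rewrite (sum_n_m_const_zero (G:=R_AbelianMonoid)). change (a n + 0 = a n). ring.
Qed.

Lemma isd_plus (a b : R -> R) x da db : is_derive a x da -> is_derive b x db ->
  is_derive (fun t => a t + b t) x (da + db).
Proof. intros. apply (is_derive_plus (K:=R_AbsRing) (V:=R_NormedModule)); auto. Qed.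

Lemma isd_minus (a b : R -> R) x da db : is_derive a x da -> is_derive b x db ->
  is_derive (fun t => a t - b t) x (da - db).
Proof. intros. apply (is_derive_minus (K:=R_AbsRing) (V:=R_NormedModule)); auto. Qed.

Lemma isd_val (a : R -> R) x d d' : d = d' -> is_derive a x d -> is_derive a x d'.
Proof. intros ->; auto. Qed.

Lemma is_derive_sum n : forall m (a : nat -> R -> R) (da : nat -> R) t0,
  (forall k, (n <= k <= m)%nat -> is_derive (a k) t0 (da k)) ->
  is_derive (fun t => sum_n_m (fun k => a k t) n m) t0 (sum_n_m da n m).
Proof.
  induction m; intros a da t0 H.
  - destruct n.
    + rewrite sum_n_n. eapply is_derive_ext. 2: apply H; lia. intro t. rewrite sum_n_n. reflexivity.
    + rewrite sum_empty by lia. eapply is_derive_ext. 2: apply (is_derive_const (K:=R_AbsRing) (V:=R_NormedModule) 0).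
      intro t. rewrite sum_empty by lia. reflexivity.
  - destruct (le_lt_dec n (S m)) as [Hn|Hn].
    + rewrite sum_rec by exact Hn.
      eapply is_derive_ext. 2: apply isd_plus. 2: apply IHm; intros; apply H; lia. 2: apply H; lia.
      intro t. simpl. rewrite sum_rec by exact Hn. reflexivity.
    + rewrite sum_empty by lia. eapply is_derive_ext. 2: apply (is_derive_const (K:=R_AbsRing) (V:=R_NormedModule) 0).
      intro t. rewrite sum_empty by lia. reflexivity.
Qed.

Lemma min_deriv0 (phi : R -> R) D : is_derive phi 0 D -> (forall t, phi 0 <= phi t) -> D = 0.
Proof.
  intros H Hm. apply is_derive_Reals in H.
  destruct (Req_dec D 0) as [|HD]; auto. exfalso.
  destruct (H (Rabs D / 2)) as [d Hd]. { pose proof (Rabs_pos_lt D HD). lra. }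
  pose proof (cond_pos d) as dpos.
  destruct (Rlt_or_le 0 D) as [Dp|Dn].
  - specialize (Hd (- (d/2))). rewrite Rplus_0_l in Hd.
    assert (Hq : Rabs ((phi (- (d / 2)) - phi 0) / - (d / 2) - D) < Rabs D / 2).
    { apply Hd. lra. rewrite Rabs_Ropp, Rabs_pos_eq; lra. }
    rewrite (Rabs_pos_eq D) in Hq by lra. apply Rabs_lt_between in Hq.
    set (q := (phi (- (d / 2)) - phi 0) / - (d / 2)) in *.
    assert (E : phi (- (d / 2)) - phi 0 = q * (- (d/2))) by (unfold q; field; lra).
    specialize (Hm (- (d/2))). nra.
  - assert (D < 0) by lra.
    specialize (Hd (d/2)). rewrite Rplus_0_l in Hd.
    assert (Hq : Rabs ((phi (d / 2) - phi 0) / (d / 2) - D) < Rabs D / 2).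
    { apply Hd. lra. rewrite Rabs_pos_eq; lra. }
    rewrite (Rabs_left D) in Hq by lra. apply Rabs_lt_between in Hq.
    set (q := (phi (d / 2) - phi 0) / (d / 2)) in *.
    assert (E : phi (d / 2) - phi 0 = q * (d/2)) by (unfold q; field; lra).
    specialize (Hm (d/2)). nra.
Qed.

Definition Dj (T : nat) (p : nat -> R) (f : nat -> R -> R -> R) (g : nat -> R)
    (u : nat -> R) (x h : nat -> R) : R :=
  sum_n_m (fun k => p k * Delta x (k - 1) * Delta h (k - 1)) 1 (S T)
  - sum_n_m (fun k => f k (x k) (u k) * h k) 1 T
  + sum_n_m (fun k => g k * h k) 1 T.

Lemma Fint_deriv T M f k : cont_f T M f -> (1 <= k <= T)%nat -> forall u, -M <= u <= M ->
  forall a b, is_derive (fun t => Fint f k (a + t * b) u) 0 (f k a u * b).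
Proof.
  intros Hc Hk u Hu a b. unfold Fint.
  apply (isd_val _ _ (scal b (f k (a + 0 * b) u))).
  { replace (a + 0 * b) with a by ring. unfold scal; simpl. unfold mult; simpl. ring. }
  apply (is_derive_comp (fun y => RInt (fun s => f k s u) 0 y) (fun t => a + t * b)).
  - apply (is_derive_RInt (V:=R_NormedModule) (fun s => f k s u) (fun y => RInt (fun s => f k s u) 0 y) 0).
    exists (mkposreal 1 Rlt_0_1). intros y _. apply (RInt_correct (V:=R_CompleteNormedModule)).
    apply (exRInt T M f k Hc Hk u Hu).
    apply (cont_t T M f k Hc Hk u Hu).
  - auto_derive. auto. ring.
Qed.

Lemma J_deriv T M f p g u x h : cont_f T M f -> inLM T M u ->
  is_derive (fun t => J T p f g u (fun k => x k + t * h k)) 0 (Dj T p f g u x h).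
Proof.
  intros Hc Hu. unfold J, Dj.
  apply isd_plus. apply isd_minus.
  - apply is_derive_sum. intros k Hk. unfold Delta. auto_derive. auto. simpl. field.
  - apply is_derive_sum. intros k Hk. apply (Fint_deriv T M f k Hc Hk). apply Rabs_le_between. apply Hu; auto.
  - apply is_derive_sum. intros k Hk. auto_derive; auto. ring.
Qed.

Lemma fold_min_le (l : list R) x0 v : In v l -> fold_right Rmin x0 l <= v.
Proof.
  induction l; simpl; intros H. destruct H.
  destruct H as [->|H]. apply Rmin_l. eapply Rle_trans. apply Rmin_r. auto.
Qed.

Lemma minp_le T p k : (1 <= k <= S T)%nat -> minp T p <= p k.
Proof.
  intros Hk. unfold minp. apply fold_min_le. apply in_map. apply in_seq. lia.
Qed.

Lemma telesc (y : nat -> R) : forall j, y j - y 0%nat = sum_n_m (fun i => Delta y (i - 1)) 1 j.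
Proof.
  induction j.
  - rewrite sum_empty by lia. apply Rminus_eq_0.
  - destruct j. rewrite sum_n_n. unfold Delta. simpl. ring.
    rewrite sum_rec by lia. rewrite <- IHj. unfold Delta. replace (S (S j) - 1)%nat with (S j) by lia. ring.
Qed.

Lemma sum_nonneg n m (a : nat -> R) : (forall k, (n <= k <= m)%nat -> 0 <= a k) -> 0 <= sum_n_m a n m.
Proof.
  intros H. replace 0 with (sum_n_m (fun _ => 0) n m).
  apply sum_le_loc. auto. rewrite (sum_n_m_const_zero (G:=R_AbelianMonoid)). reflexivity.
Qed.

Lemma sum_mono_upper (a : nat -> R) j m : (forall k, 0 <= a k) -> (j <= m)%nat ->
  sum_n_m a 1 j <= sum_n_m a 1 m.
Proof.
  intros H Hj. destruct j.
  - rewrite sum_empty by lia. apply sum_nonneg; auto.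
  - rewrite (sum_n_m_Chasles a 1 (S j) m) by lia.
    change (sum_n_m a 1 (S j) <= sum_n_m a 1 (S j) + sum_n_m a (S (S j)) m).
    pose proof (sum_nonneg (S (S j)) m a ltac:(auto)). lra.
Qed.

Lemma term_le_sum n m k (a : nat -> R) : (n <= k <= m)%nat -> (forall j, (n <= j <= m)%nat -> 0 <= a j) ->
  a k <= sum_n_m a n m.
Proof.
  intros Hk H.
  apply Rle_trans with (sum_n_m (fun j => if Nat.eq_dec j k then a j else 0) n m).
  - rewrite (sum_single n m k _ Hk). destruct (Nat.eq_dec k k); [lra|lia].
    intros j _ Hj. destruct (Nat.eq_dec j k); [lia|reflexivity].
  - apply sum_le_loc. intros j Hj. destruct (Nat.eq_dec j k). lra. apply H; auto.
Qed.

Lemma y_bound T (y : nat -> R) j : inE T y -> (1 <= j <= T)%nat ->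
  Rabs (y j) <= sum_n_m (fun i => Rabs (Delta y (i - 1))) 1 (S T).
Proof.
  intros [H0 _] Hj. replace (y j) with (y j - y 0%nat) by (rewrite H0; ring).
  rewrite telesc. eapply Rle_trans. apply sum_abs_R.
  apply sum_mono_upper. intros; apply Rabs_pos. lia.
Qed.

Lemma sum_minus_R n m (a b : nat -> R) : sum_n_m (fun k => a k - b k) n m = sum_n_m a n m - sum_n_m b n m.
Proof.
  unfold Rminus. rewrite sum_plus_R. f_equal.
  replace (- sum_n_m b n m) with (-1 * sum_n_m b n m) by ring.
  rewrite <- (sum_scal_R n m (-1) b). apply sum_ext_R. intros; ring.
Qed.

Lemma Jlower T M f p g alpha : cont_f T M f -> 0 < alpha ->
  (forall k y u, (1 <= k <= T)%nat -> alpha <= Rabs y -> Rabs u <= M -> y * f k y u <= 0) ->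
  0 < minp T p ->
  exists K1, forall u y, inLM T M u -> inE T y ->
   sum_n_m (fun i => minp T p / 4 * (Delta y (i - 1)) ^ 2) 1 (S T) - K1 <= J T p f g u y.
Proof.
  intros Hc Ha HA Hm.
  destruct (fchoice (fun k C => (1 <= k <= T)%nat -> forall y u, -M <= u <= M -> Fint f k y u <= C)) as [C HC].
  { intro k. destruct (classic (1 <= k <= T)%nat) as [Hk|Hk].
    - destruct (Fupper T M f k alpha Hc Hk Ha HA) as [C HC]. exists C. auto.
    - exists 0. intro; contradiction. }
  set (m := minp T p) in *.
  set (G := sum_n_m (fun k => Rabs (g k)) 1 T).
  exists (INR (S T) * (G ^ 2 / m) + sum_n_m C 1 T).
  intros u y Hu Hy.
  set (A := sum_n_m (fun i => Rabs (Delta y (i - 1))) 1 (S T)).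
  assert (F1 : sum_n_m (fun i => m / 2 * (Delta y (i - 1)) ^ 2) 1 (S T) <=
               sum_n_m (fun k => p k / 2 * (Delta y (k - 1)) ^ 2) 1 (S T)).
  { apply sum_le_loc. intros k Hk. pose proof (minp_le T p k Hk). fold m in H.
    pose proof (pow2_ge_0 (Delta y (k - 1))). nra. }
  assert (F2 : sum_n_m (fun k => Fint f k (y k) (u k)) 1 T <= sum_n_m C 1 T).
  { apply sum_le_loc. intros k Hk. apply HC; auto. apply Rabs_le_between. apply Hu; auto. }
  assert (F3 : - (G * A) <= sum_n_m (fun k => g k * y k) 1 T).
  { assert (Rabs (sum_n_m (fun k => g k * y k) 1 T) <= G * A).
    { eapply Rle_trans. apply sum_abs_R. unfold G. rewrite Rmult_comm, <- sum_scal_R.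
      apply sum_le_loc. intros k Hk. rewrite Rabs_mult, Rmult_comm.
      apply Rmult_le_compat_r. apply Rabs_pos. apply y_bound; auto. }
    pose proof (Rle_abs (- sum_n_m (fun k => g k * y k) 1 T)). rewrite Rabs_Ropp in H0. lra. }
  assert (F4 : sum_n_m (fun i => m / 2 * (Delta y (i - 1)) ^ 2) 1 (S T) - G * A =
               sum_n_m (fun i => m / 2 * (Delta y (i - 1)) ^ 2 - G * Rabs (Delta y (i - 1))) 1 (S T)).
  { rewrite sum_minus_R. unfold A. rewrite (sum_scal_R 1 (S T) G). reflexivity. }
  assert (F5 : sum_n_m (fun i => m / 4 * (Delta y (i - 1)) ^ 2 - G ^ 2 / m) 1 (S T) <=
               sum_n_m (fun i => m / 2 * (Delta y (i - 1)) ^ 2 - G * Rabs (Delta y (i - 1))) 1 (S T)).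
  { apply sum_le_loc. intros k _. set (d := Delta y (k - 1)).
    assert (E : d ^ 2 = Rabs d ^ 2) by (rewrite RPow_abs, Rabs_pos_eq; [reflexivity| apply pow2_ge_0]).
    rewrite E. set (a := Rabs d).
    assert (E2 : m / 2 * a ^ 2 - G * a - (m / 4 * a ^ 2 - G ^ 2 / m) = (m * a / 2 - G) ^ 2 / m) by (field; lra).
    assert (0 <= (m * a / 2 - G) ^ 2 / m). { apply Rmult_le_pos. apply pow2_ge_0. left; apply Rinv_0_lt_compat; lra. }
    lra. }
  assert (F6 : sum_n_m (fun i => m / 4 * (Delta y (i - 1)) ^ 2 - G ^ 2 / m) 1 (S T) =
               sum_n_m (fun i => m / 4 * (Delta y (i - 1)) ^ 2) 1 (S T) - INR (S T) * (G ^ 2 / m)).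
  { rewrite sum_minus_R. rewrite sum_n_m_const. replace (S (S T) - 1)%nat with (S T) by lia. reflexivity. }
  unfold J. lra.
Qed.

Lemma sum_nonneg' n m (a : nat -> R) : (forall k, 0 <= a k) -> 0 <= sum_n_m a n m.
Proof. intros; apply sum_nonneg; auto. Qed.

Lemma Jcoer T M f p g alpha : cont_f T M f -> 0 < alpha ->
  (forall k y u, (1 <= k <= T)%nat -> alpha <= Rabs y -> Rabs u <= M -> y * f k y u <= 0) ->
  0 < minp T p ->
  (exists c, forall u y, inLM T M u -> inE T y -> - c <= J T p f g u y) /\
  (forall L, exists B, forall u y, inLM T M u -> inE T y -> J T p f g u y <= L ->
      forall j, (1 <= j <= T)%nat -> Rabs (y j) <= B).
Proof.
  intros Hc Ha HA Hm. destruct (Jlower T M f p g alpha Hc Ha HA Hm) as [K1 HK].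
  set (m := minp T p) in *.
  split.
  - exists K1. intros u y Hu Hy. specialize (HK u y Hu Hy).
    assert (0 <= sum_n_m (fun i => m / 4 * Delta y (i - 1) ^ 2) 1 (S T)).
    { apply sum_nonneg'. intro k. pose proof (pow2_ge_0 (Delta y (k - 1))). nra. }
    lra.
  - intro L. set (Q := 4 * (L + K1) / m).
    exists (INR (S T) * (Q + 1)). intros u y Hu Hy HL j Hj.
    specialize (HK u y Hu Hy).
    assert (Hd : forall i, (1 <= i <= S T)%nat -> Rabs (Delta y (i - 1)) <= Q + 1).
    { intros i Hi.
      assert (H1 : m / 4 * Delta y (i - 1) ^ 2 <= L + K1).
      { eapply Rle_trans. apply (term_le_sum 1 (S T) i (fun i => m / 4 * Delta y (i - 1) ^ 2)). auto.
        intros; pose proof (pow2_ge_0 (Delta y (j0 - 1))); nra. lra. }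
      assert (H2 : Delta y (i - 1) ^ 2 <= Q).
      { unfold Q. apply (Rmult_le_reg_l (m / 4)). lra. replace (m / 4 * (4 * (L + K1) / m)) with (L + K1) by (field; lra). exact H1. }
      assert (E : Delta y (i - 1) ^ 2 = Rabs (Delta y (i - 1)) ^ 2).
      { rewrite RPow_abs, Rabs_pos_eq; [reflexivity| apply pow2_ge_0]. }
      rewrite E in H2. pose proof (Rabs_pos (Delta y (i - 1))). nra. }
    eapply Rle_trans. apply (y_bound T y j Hy Hj).
    replace (INR (S T) * (Q + 1)) with (sum_n_m (fun _ => Q + 1) 1 (S T)).
    apply sum_le_loc. exact Hd.
    rewrite sum_n_m_const. replace (S (S T) - 1)%nat with (S T) by lia. reflexivity.
Qed.

Lemma J_zero T p f g u : J T p f g u (fun _ => 0) = 0.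
Proof.
  unfold J.
  rewrite (sum_ext_R 1 (S T) _ (fun _ => 0)) by (intros; unfold Delta; simpl; ring).
  rewrite (sum_ext_R 1 T (fun k => Fint f k 0 (u k)) (fun _ => 0)) by (intros; unfold Fint; apply (RInt_point (V:=R_CompleteNormedModule))).
  rewrite (sum_ext_R 1 T (fun k => g k * 0) (fun _ => 0)) by (intros; ring).
  rewrite !(sum_n_m_const_zero (G:=R_AbelianMonoid)). change (0 - 0 + 0 = 0). ring.
Qed.

Lemma cv_ext a b l : (forall i, a i = b i) -> Un_cv a l -> Un_cv b l.
Proof. intros E H e He. destruct (H e He) as [N HN]. exists N. intros. rewrite <- E. auto. Qed.

Lemma J_cv T M f p g (ui yi : nat -> nat -> R) ub y : cont_f T M f ->
  (forall i, inLM T M (ui i)) -> inLM T M ub ->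
  (forall k, (1 <= k <= T)%nat -> Un_cv (fun i => ui i k) (ub k)) ->
  (forall j, (j <= S T)%nat -> Un_cv (fun i => yi i j) (y j)) ->
  Un_cv (fun i => J T p f g (ui i) (yi i)) (J T p f g ub y).
Proof.
  intros Hc Hui Hub Hu Hy. unfold J.
  apply CV_plus. apply CV_minus.
  - apply sum_cv. intros k Hk. unfold Delta.
    apply (cv_ext (fun i => p k / 2 * ((yi i (S (k - 1)) - yi i (k - 1)%nat) * ((yi i (S (k - 1)) - yi i (k - 1)%nat) * 1)))).
    intros; reflexivity.
    apply CV_mult. apply cv_const. apply CV_mult. apply CV_minus; apply Hy; lia.
    apply CV_mult. apply CV_minus; apply Hy; lia. apply cv_const.
  - apply sum_cv. intros k Hk. apply (Fcont T M f k Hc Hk). apply Hy; lia. apply Hu; auto.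
    intro n. apply Rabs_le_between. apply Hui; auto. apply Rabs_le_between. apply Hub; auto.
  - apply sum_cv. intros k Hk. apply CV_mult. apply cv_const. apply Hy; lia.
Qed.

Lemma core T M f p g alpha : cont_f T M f -> 0 < alpha ->
  (forall k y u, (1 <= k <= T)%nat -> alpha <= Rabs y -> Rabs u <= M -> y * f k y u <= 0) ->
  0 < minp T p ->
  forall (un : nat -> nat -> R) ubar (xn : nat -> nat -> R) (eps : nat -> R),
  (forall n, inLM T M (un n)) -> inLM T M ubar ->
  (forall k, (1 <= k <= T)%nat -> Un_cv (fun n => un n k) (ubar k)) ->
  (forall n, inE T (xn n)) -> (forall n, 0 <= eps n <= 1) -> Un_cv eps 0 ->
  (forall n v, inE T v -> J T p f g (un n) (xn n) <= J T p f g (un n) v + eps n) ->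
  exists phi xbar, incr phi /\ inE T xbar /\
    (forall j, (j <= S T)%nat -> Un_cv (fun i => xn (phi i) j) (xbar j)) /\
    (forall v, inE T v -> J T p f g ubar xbar <= J T p f g ubar v).
Proof.
  intros Hc Ha HA Hm un ubar xn eps Hun Hub Hcv Hxn Heps Heps0 Hmin.
  destruct (Jcoer T M f p g alpha Hc Ha HA Hm) as [_ Hco].
  destruct (Hco 1) as [B HB].
  assert (Hb : forall n j, (1 <= j <= T)%nat -> Rabs (xn n j) <= B).
  { intros n j Hj. apply (HB (un n)); auto.
    pose proof (Hmin n (fun _ => 0) ltac:(split; reflexivity)). rewrite J_zero in H.
    specialize (Heps n). lra. }
  destruct (BWK T xn B Hb) as [phi [Hphi Hl]].
  destruct (fchoice (fun j l => (1 <= j <= T)%nat -> Un_cv (fun i => xn (phi i) j) l)) as [L HL].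
  { intro j. destruct (classic (1 <= j <= T)%nat) as [Hj|Hj].
    - destruct (Hl j Hj) as [l Hl']. exists l. auto.
    - exists 0. intro; contradiction. }
  set (xbar := fun j => if andb (Nat.leb 1 j) (Nat.leb j T) then L j else 0).
  assert (Hx : forall j, (j <= S T)%nat -> Un_cv (fun i => xn (phi i) j) (xbar j)).
  { intros j Hj. unfold xbar. destruct (Nat.leb 1 j) eqn:E1; destruct (Nat.leb j T) eqn:E2; simpl.
    - apply HL. apply Nat.leb_le in E1, E2. lia.
    - apply Nat.leb_le in E1. apply Nat.leb_gt in E2. assert (j = S T) by lia. subst j.
      apply (cv_ext (fun _ => 0)). intro i. symmetry. apply (Hxn (phi i)). apply cv_const.
    - apply Nat.leb_gt in E1. assert (j = 0%nat) by lia. subst j.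
      apply (cv_ext (fun _ => 0)). intro i. symmetry. apply (Hxn (phi i)). apply cv_const.
    - apply Nat.leb_gt in E1. assert (j = 0%nat) by lia. subst j.
      apply (cv_ext (fun _ => 0)). intro i. symmetry. apply (Hxn (phi i)). apply cv_const. }
  assert (HinE : inE T xbar).
  { unfold inE, xbar. split. reflexivity.
    rewrite (proj2 (Nat.leb_gt (S T) T) ltac:(lia)). simpl. reflexivity. }
  exists phi, xbar. split; [exact Hphi|]. split; [exact HinE|]. split; [exact Hx|].
  intros v Hv.
  assert (Hu' : forall k, (1 <= k <= T)%nat -> Un_cv (fun i => un (phi i) k) (ubar k)).
  { intros k Hk. apply (sub_cv (fun n => un n k)); auto. }
  pose proof (J_cv T M f p g (fun i => un (phi i)) (fun i => xn (phi i)) ubar xbar Hc (fun i => Hun (phi i)) Hub Hu' Hx) as C1.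
  pose proof (J_cv T M f p g (fun i => un (phi i)) (fun _ => v) ubar v Hc (fun i => Hun (phi i)) Hub Hu' (fun j _ => cv_const (v j))) as C2.
  pose proof (CV_plus _ _ _ _ C2 (sub_cv eps 0 phi Heps0 Hphi)) as C3. rewrite Rplus_0_r in C3.
  exact (Rle_cv_lim (fun n => Hmin (phi n) v Hv) C1 C3).
Qed.

Lemma min_V T M f p g u x : cont_f T M f -> inLM T M u -> inE T x ->
  (forall v, inE T v -> J T p f g u x <= J T p f g u v) ->
  V T p f g u x /\ forall h, inE T h -> Dj T p f g u x h = 0.
Proof.
  intros Hc Hu Hx Hmin.
  assert (HD : forall h, inE T h -> Dj T p f g u x h = 0).
  { intros h Hh. apply (min_deriv0 (fun t => J T p f g u (fun k => x k + t * h k))).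
    apply (J_deriv T M); auto.
    intro t. replace (fun k => x k + 0 * h k) with x.
    apply Hmin. destruct Hx as [H0 H1]; destruct Hh as [H2 H3]. split.
    rewrite H0, H2; ring. rewrite H1, H3; ring.
    apply functional_extensionality; intro; ring. }
  split; [|exact HD]. split; [exact Hx|]. split; [exact Hmin|].
  intros h Hh. apply (isd_val _ _ (Dj T p f g u x h)). exact (HD h Hh). apply (J_deriv T M); auto.
Qed.

Definition ek (k : nat) : nat -> R := fun j => if Nat.eq_dec j k then 1 else 0.

Lemma EL T M f p g u x k : cont_f T M f -> inLM T M u -> inE T x -> (1 <= k <= T)%nat ->
  Dj T p f g u x (ek k) = 0 ->
  Delta (fun j => p j * Delta x (j - 1)) k + f k (x k) (u k) = g k.
Proof.
  intros Hc Hu Hx Hk HD. unfold Dj in HD.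
  set (e := ek k) in HD.
  rewrite (sum_single 1 T k (fun k0 => g k0 * e k0)) in HD by
    (first [lia | intros j _ Hj; unfold e, ek; destruct (Nat.eq_dec j k); [lia|ring]]).
  rewrite (sum_single 1 T k (fun k0 => f k0 (x k0) (u k0) * e k0)) in HD by
    (first [lia | intros j _ Hj; unfold e, ek; destruct (Nat.eq_dec j k); [lia|ring]]).
  rewrite (sum_ext_R 1 (S T) _ (fun j => p j * Delta x (j - 1) * e j - p j * Delta x (j - 1) * e (j - 1)%nat)) in HD.
  2:{ intros j Hj. unfold Delta. replace (S (j - 1)) with j by lia. ring. }
  rewrite sum_minus_R in HD.
  rewrite (sum_single 1 (S T) k (fun j => p j * Delta x (j - 1) * e j)) in HD by
    (first [lia | intros j _ Hj; unfold e, ek; destruct (Nat.eq_dec j k); [lia|ring]]).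
  rewrite (sum_single 1 (S T) (S k) (fun j => p j * Delta x (j - 1) * e (j - 1)%nat)) in HD by
    (first [lia | intros j Hj' Hj; unfold e, ek; destruct (Nat.eq_dec (j - 1) k); [lia|ring]]).
  unfold e, ek in HD. simpl in HD. replace (k - 0)%nat with k in HD by lia.
  destruct (Nat.eq_dec k k); [|lia].
  unfold Delta in *. replace (S k - 1)%nat with k by lia.
  replace (S (k - 1)) with k in * by lia. lra.
Qed.

Lemma fold_max_ge (l : list R) x0 v : In v l -> v <= fold_right Rmax x0 l.
Proof.
  induction l; simpl; intros Hv. destruct Hv.
  destruct Hv as [->|Hv]. apply Rmax_l. eapply Rle_trans. apply IHl; auto. apply Rmax_r.
Qed.

Lemma maxnorm_ge T w k : (1 <= k <= T)%nat -> Rabs (w k) <= maxnorm T w.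
Proof.
  intros Hk. unfold maxnorm. apply fold_max_ge. apply (in_map (fun k => Rabs (w k))). apply in_seq. lia.
Qed.

Lemma maxnorm_cv T (un : nat -> nat -> R) ubar :
  is_lim_seq (fun n => maxnorm T (fun k => un n k - ubar k)) 0 ->
  forall k, (1 <= k <= T)%nat -> Un_cv (fun n => un n k) (ubar k).
Proof.
  intros H k Hk. apply is_lim_seq_Reals in H. intros e He. destruct (H e He) as [N HN].
  exists N. intros n Hn. specialize (HN n Hn). unfold R_dist in *. rewrite Rminus_0_r in HN.
  eapply Rle_lt_trans. apply (maxnorm_ge T (fun k => un n k - ubar k) k Hk).
  eapply Rle_lt_trans. apply Rle_abs. exact HN.
Qed.

Lemma cv_sqrt0 a : (forall n, 0 <= a n) -> Un_cv a 0 -> Un_cv (fun n => sqrt (a n)) 0.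
Proof.
  intros Hp H e He. destruct (H (e * e)) as [N HN]. nra. exists N. intros n Hn.
  specialize (HN n Hn). unfold R_dist in *. rewrite Rminus_0_r in *.
  rewrite Rabs_pos_eq in HN by auto. rewrite Rabs_pos_eq by apply sqrt_pos.
  rewrite <- (sqrt_square e) by lra. apply sqrt_lt_1_alt. split; auto.
Qed.

Lemma inv_cv0 : Un_cv (fun n => / (INR n + 1)) 0.
Proof.
  intros e He. destruct (small_inv e He) as [N HN]. exists N. intros n Hn. unfold R_dist.
  rewrite Rminus_0_r. rewrite Rabs_pos_eq by (left; apply RinvN_pos).
  eapply Rle_lt_trans; [|exact HN]. apply Rinv_le_contravar. pose proof (pos_INR N); lra.
  apply le_INR in Hn. lra.
Qed.

Theorem theorem1 :
  forall (T : nat) (M : R) (f : nat -> R -> R -> R) (p g : nat -> R),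
    (1 <= T)%nat -> 0 < M ->
    cont_f T M f ->
    (exists alpha, 0 < alpha /\
       forall k y u, (1 <= k <= T)%nat -> alpha <= Rabs y -> Rabs u <= M ->
         y * f k y u <= 0) ->
    0 < minp T p ->
    (forall u, inLM T M u -> exists x, V T p f g u x)
    /\
    (forall (un : nat -> nat -> R) (ubar : nat -> R) (xn : nat -> nat -> R),
       (forall n, inLM T M (un n)) -> inLM T M ubar ->
       is_lim_seq (fun n => maxnorm T (fun k => un n k - ubar k)) 0 ->
       (forall n, V T p f g (un n) (xn n)) ->
       exists (phi : nat -> nat) (xbar : nat -> R),
         (forall i, (phi i < phi (S i))%nat)
         /\ inE T xbar
         /\ is_lim_seq (fun i => normE T (fun k => xn (phi i) k - xbar k)) 0
         /\ (forall v, inE T v -> J T p f g ubar xbar <= J T p f g ubar v)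
         /\ V T p f g ubar xbar
         /\ (forall k, (1 <= k <= T)%nat ->
               Delta (fun j => p j * Delta xbar (j - 1)) k
               + f k (xbar k) (ubar k) = g k)).
Proof.
  intros T M f p g HT HM Hc [alpha [Ha HA]] Hm. split.
  - intros u Hu.
    destruct (Jcoer T M f p g alpha Hc Ha HA Hm) as [[c Hlow] _].
    set (S := fun r => exists v, inE T v /\ r = - J T p f g u v).
    destruct (completeness S) as [s [Hs1 Hs2]].
    { exists c. intros r [v [Hv ->]]. specialize (Hlow u v Hu Hv). lra. }
    { exists (- J T p f g u (fun _ => 0)). exists (fun _ => 0). split; [split; reflexivity | reflexivity]. }
    assert (Happ : forall n : nat, exists v, inE T v /\ J T p f g u v <= - s + / (INR n + 1)).
    { intro n. apply NNPP. intro Hn. assert (s <= s - / (INR n + 1)).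
      { apply Hs2. intros r [v [Hv ->]]. apply Rnot_lt_le. intro Hr. apply Hn. exists v. split; auto. lra. }
      pose proof (RinvN_pos n). lra. }
    destruct (fchoice _ Happ) as [vn Hvn].
    destruct (core T M f p g alpha Hc Ha HA Hm (fun _ => u) u vn (fun n => / (INR n + 1))) as [phi [xbar [_ [Hx [_ Hmin]]]]]; auto.
    + intros k Hk. apply cv_const.
    + intro n. apply Hvn.
    + intro n. split. left; apply RinvN_pos. pose proof (pos_INR n).
      rewrite <- Rinv_1. apply Rinv_le_contravar; lra.
    + apply inv_cv0.
    + intros n v Hv. destruct (Hvn n) as [_ H1]. assert (- J T p f g u v <= s) by (apply Hs1; exists v; auto). lra.
    + exists xbar. exact (proj1 (min_V T M f p g u xbar Hc Hu Hx Hmin)).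
  - intros un ubar xn Hun Hub Hlim HV.
    destruct (core T M f p g alpha Hc Ha HA Hm un ubar xn (fun _ => 0)) as [phi [xbar [Hphi [Hx [Hcv Hmin]]]]]; auto.
    + apply (maxnorm_cv T un ubar Hlim).
    + intro n. apply (HV n).
    + intro; lra.
    + apply cv_const.
    + intros n v Hv. rewrite Rplus_0_r. apply (HV n). exact Hv.
    + destruct (min_V T M f p g ubar xbar Hc Hub Hx Hmin) as [HVb HD].
      exists phi, xbar. split; [exact Hphi|]. split; [exact Hx|]. split.
      * apply is_lim_seq_Reals. unfold normE.
        apply cv_sqrt0. intro n. apply sum_nonneg'. intro; apply pow2_ge_0.
        replace 0 with (sum_n_m (fun _ : nat => 0) 1 T) by apply (sum_n_m_const_zero (G:=R_AbelianMonoid)).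
        apply sum_cv. intros k Hk. unfold Delta.
        apply (cv_ext (fun i => ((xn (phi i) (S k) - xbar (S k)) - (xn (phi i) k - xbar k)) * (((xn (phi i) (S k) - xbar (S k)) - (xn (phi i) k - xbar k)) * 1))).
        intro; reflexivity.
        replace 0 with (0 * (0 * 1)) by ring.
        assert (Z : forall j, (j <= S T)%nat -> Un_cv (fun i => xn (phi i) j - xbar j) 0).
        { intros j Hj. replace 0 with (xbar j - xbar j) by ring. apply CV_minus. apply Hcv; auto. apply cv_const. }
        assert (Z2 : Un_cv (fun i => (xn (phi i) (S k) - xbar (S k)) - (xn (phi i) k - xbar k)) 0).
        { replace 0 with (0 - 0) by ring. apply CV_minus; apply Z; lia. }
        apply CV_mult. exact Z2. apply CV_mult. exact Z2. apply cv_const.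
      * split; [exact Hmin|]. split; [exact HVb|].
        intros k Hk. apply (EL T M f p g ubar xbar k Hc Hub Hx Hk).
        apply HD. unfold inE, ek. split.
        destruct (Nat.eq_dec 0 k); [lia|reflexivity]. destruct (Nat.eq_dec (S T) k); [lia|reflexivity].
Qed.
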